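(* Let $n\ge 2$, and let $A=(a_{ij})$ be a real symmetric $n\times n$ matrix with eigenvalues $\mu_1\ge \mu_2\ge \cdots\ge \mu_n$. Assume that $0\le a_{ij}\le 1$ for all $i\ne j$, and $a_{ii}\ge 0$ for all $1\le i\le n$. Then \[ \mu_{n-1}+\mu_n\ge -\frac{2n}{3}. \] In particular, $\mu_{n-1}\ge -\frac{n}{3}$. *)

(* Defs.v *)
From mathcomp Require Import all_boot all_order all_algebra.
From mathcomp Require Import reals.
Set Implicit Arguments. Unset Strict Implicit. Unset Printing Implicit Defensive.
Import Order.TTheory GRing.Theory Num.Theory.
Local Open Scope ring_scope.

(* [mu] is the list of eigenvalues of the square matrix [A], counted with
   (algebraic) multiplicity and listed in non-increasing order
   mu_1 >= mu_2 >= ... >= mu_n (stored 0-based as mu`_0, ..., mu`_(n-1)):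
   the characteristic polynomial of A splits as prod (X - mu_i). *)
Definition eigenvalues_desc (R : numDomainType) (n : nat) (A : 'M[R]_n)
  (mu : seq R) : Prop :=
  [/\ size mu = n,
      sorted (fun x y => y <= x) mu
    & char_poly A = \prod_(x <- mu) ('X - x%:P)].

(* Main.v *)
Require Import Defs.
From mathcomp Require Import all_boot all_order all_algebra.
From mathcomp Require Import reals.
From mathcomp Require Import ring lra.
Set Implicit Arguments. Unset Strict Implicit. Unset Printing Implicit Defensive.
Import Order.TTheory GRing.Theory Num.Theory.
Local Open Scope ring_scope.

Lemma key_poly (R : realFieldType) (G r : R) : 0 <= G -> G <= r ->
  0 <= 4 * r^+4 + 22 * r^+2 * G^+2 - 8 * G^+4 - 18 * r^+3 * G.
Proof.
move=> G0 Gr.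
have -> : 4 * r^+4 + 22 * r^+2 * G^+2 - 8 * G^+4 - 18 * r^+3 * G =
   2 * (2 * G - r)^+2 * (G + 2 * r) * (r - G) by ring.
apply: mulr_ge0; last by rewrite subr_ge0.
apply: mulr_ge0; last by lra.
apply: mulr_ge0 => //; exact: sqr_ge0.
Qed.

Lemma point_ineq (R : realFieldType) (g r P S : R) : 0 <= r -> g ^+ 2 <= r ^+ 2 ->
  P = (2 * g ^+ 2 - r ^+ 2) / r -> S = (2 * P ^+ 2 - r ^+ 2) / r ->
  `|g| <= 2/3 * r + 7/18 * P - 1/18 * S.
Proof.
move=> r0 gr hP hS.
have [r00|rn0] := eqVneq r 0.
  subst r.
  have g0 : g = 0.
    by apply/eqP; rewrite -sqrf_eq0 eq_le sqr_ge0 andbT; move: gr; rewrite expr0n.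
  rewrite hS hP g0 !invr0 !mulr0 normr0. lra.
have rp : 0 < r by rewrite lt0r rn0.
have Gr : `|g| <= r by rewrite -(ler_pXn2r (isT : (0 < 2)%N)) ?nnegrE ?normr_ge0 // real_normK ?num_real.
have E : (2/3 * r + 7/18 * P - 1/18 * S - `|g|) * (18 * r^+3) =
   4 * r^+4 + 22 * r^+2 * `|g|^+2 - 8 * `|g|^+4 - 18 * r^+3 * `|g|.
  rewrite hS hP; have -> : `|g| ^+ 4 = (`|g| ^+ 2) ^+ 2 by rewrite -exprM.
  rewrite real_normK ?num_real //. field. done.
have := key_poly (normr_ge0 g) Gr; rewrite -E => H.
rewrite -subr_ge0; move: H; rewrite pmulr_lge0 //.
by rewrite mulr_gt0 // exprn_gt0.
Qed.
Section Sums.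
Variables (R : realFieldType) (n : nat).

Lemma dsum_mul (F G : 'I_n -> R) :
  \sum_i \sum_j F i * G j = (\sum_i F i) * (\sum_j G j).
Proof. by rewrite mulr_suml; apply: eq_bigr => i _; rewrite mulr_sumr. Qed.

Lemma dsum_sq (F : 'I_n -> R) : (\sum_i F i) ^+ 2 = \sum_i \sum_j F i * F j.
Proof. by rewrite expr2 dsum_mul. Qed.

Lemma dsum_add (F G : 'I_n -> 'I_n -> R) :
  \sum_i \sum_j (F i j + G i j) = \sum_i \sum_j F i j + \sum_i \sum_j G i j.
Proof. by rewrite -big_split; apply: eq_bigr => i _; rewrite big_split. Qed.

Lemma dsum_sub (F G : 'I_n -> 'I_n -> R) :
  \sum_i \sum_j (F i j - G i j) = \sum_i \sum_j F i j - \sum_i \sum_j G i j.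
Proof. by rewrite -sumrB; apply: eq_bigr => i _; rewrite sumrB. Qed.

Lemma dsum_scale (c : R) (F : 'I_n -> 'I_n -> R) :
  \sum_i \sum_j (c * F i j) = c * \sum_i \sum_j F i j.
Proof. by rewrite mulr_sumr; apply: eq_bigr => i _; rewrite mulr_sumr. Qed.

Lemma cauchy_schwarz (F G : 'I_n -> R) :
  (\sum_i F i * G i) ^+ 2 <= (\sum_i F i ^+ 2) * (\sum_i G i ^+ 2).
Proof.
have H : 0 <= \sum_i \sum_j (F i * G j - F j * G i) ^+ 2.
  by apply: sumr_ge0 => i _; apply: sumr_ge0 => j _; exact: sqr_ge0.
have E : \sum_i \sum_j (F i * G j - F j * G i) ^+ 2 =
   \sum_i \sum_j (F i ^+ 2 * G j ^+ 2 + G i ^+ 2 * F j ^+ 2 - 2 * ((F i * G i) * (F j * G j))).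
  by apply: eq_bigr => i _; apply: eq_bigr => j _; ring.
rewrite E dsum_sub dsum_add dsum_scale !dsum_mul in H.
rewrite -subr_ge0 expr2; lra.
Qed.

Lemma dsum_lin (a b c : R) (r p q s t : 'I_n -> R) :
 \sum_i \sum_j (a * (r i * r j) + b * (p i * p j + q i * q j) - c * (s i * s j + t i * t j))
 = a * (\sum_i r i)^+2 + b * ((\sum_i p i)^+2 + (\sum_i q i)^+2)
   - c * ((\sum_i s i)^+2 + (\sum_i t i)^+2).
Proof. by rewrite dsum_sub dsum_add !dsum_scale !dsum_add !dsum_sq. Qed.

End Sums.
Section Dbl.
Variable R : rcfType.

Definition nrm (a b : R) := Num.sqrt (a ^+ 2 + b ^+ 2).
Definition dbl1 (a b : R) := (a ^+ 2 - b ^+ 2) / nrm a b.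
Definition dbl2 (a b : R) := 2 * a * b / nrm a b.

Lemma nrm_ge0 a b : 0 <= nrm a b.
Proof. exact: sqrtr_ge0. Qed.

Lemma nrm_sq a b : nrm a b ^+ 2 = a ^+ 2 + b ^+ 2.
Proof. by rewrite sqr_sqrtr // addr_ge0 ?sqr_ge0. Qed.

Lemma nrm_eq0 a b : nrm a b = 0 -> a = 0 /\ b = 0.
Proof.
move=> h; have : a ^+ 2 + b ^+ 2 = 0 by rewrite -nrm_sq h expr0n.
move=> h2; have ha : a ^+ 2 = 0.
  by apply/eqP; rewrite eq_le sqr_ge0 andbT -h2 lerDl sqr_ge0.
have hb : b ^+ 2 = 0 by move: h2; rewrite ha add0r.
by split; apply/eqP; rewrite -sqrf_eq0; apply/eqP.
Qed.

Lemma dbl_norm a b : dbl1 a b ^+ 2 + dbl2 a b ^+ 2 = a ^+ 2 + b ^+ 2.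
Proof.
rewrite /dbl1 /dbl2.
have [h|h] := eqVneq (nrm a b) 0.
  have [ha hb] := nrm_eq0 h; rewrite h invr0 !mulr0 ha hb expr0n /=; lra.
have E := nrm_sq a b.
have -> : ((a ^+ 2 - b ^+ 2) / nrm a b) ^+ 2 + (2 * a * b / nrm a b) ^+ 2 =
  (a ^+ 2 + b ^+ 2) ^+ 2 / nrm a b ^+ 2 by field.
by rewrite -E; field.
Qed.

Lemma nrm_dbl a b : nrm (dbl1 a b) (dbl2 a b) = nrm a b.
Proof. by rewrite /nrm dbl_norm. Qed.

Lemma nrm_mul_dbl1 a b : nrm a b * dbl1 a b = a ^+ 2 - b ^+ 2.
Proof.
rewrite /dbl1; have [h|h] := eqVneq (nrm a b) 0.
  by have [ha hb] := nrm_eq0 h; rewrite h mul0r ha hb expr0n /= subr0.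
by rewrite mulrC divfK.
Qed.

Lemma nrm_mul_dbl2 a b : nrm a b * dbl2 a b = 2 * a * b.
Proof.
rewrite /dbl2; have [h|h] := eqVneq (nrm a b) 0.
  by have [ha hb] := nrm_eq0 h; rewrite h mul0r ha hb !mulr0.
by rewrite mulrC divfK.
Qed.

Lemma dbl_inner a b c d :
  dbl1 a b * dbl1 c d + dbl2 a b * dbl2 c d =
  (2 * (a * c + b * d) ^+ 2 - nrm a b ^+ 2 * nrm c d ^+ 2) / (nrm a b * nrm c d).
Proof. rewrite /dbl1 /dbl2 !nrm_sq invfM; ring. Qed.

Lemma lagrange a b c d :
  (a * c + b * d) ^+ 2 <= (nrm a b * nrm c d) ^+ 2.
Proof.
rewrite exprMn !nrm_sq.
have -> : (a ^+ 2 + b ^+ 2) * (c ^+ 2 + d ^+ 2) = (a * c + b * d) ^+ 2 + (a * d - b * c) ^+ 2 by ring.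
by rewrite lerDl sqr_ge0.
Qed.

End Dbl.

Section Core.
Variables (R : rcfType) (n : nat).

Lemma abs_sum_bound (x y : 'I_n -> R) :
  \sum_i x i ^+ 2 = 1 -> \sum_i y i ^+ 2 = 1 -> \sum_i x i * y i = 0 ->
  \sum_i \sum_j `|x i * x j + y i * y j| <= 4 * n%:R / 3.
Proof.
move=> hx hy hxy.
pose r i := nrm (x i) (y i).
pose p i := dbl1 (x i) (y i).
pose q i := dbl2 (x i) (y i).
pose s i := dbl1 (p i) (q i).
pose t i := dbl2 (p i) (q i).
have rr i : nrm (p i) (q i) = r i by rewrite nrm_dbl.
have hpt i j : `|x i * x j + y i * y j| <=
   2/3 * (r i * r j) + 7/18 * (p i * p j + q i * q j) - 1/18 * (s i * s j + t i * t j).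
  apply: (point_ineq (g := x i * x j + y i * y j)).
  - by rewrite mulr_ge0 ?nrm_ge0.
  - exact: lagrange.
  - by rewrite /p /q dbl_inner exprMn.
  - rewrite /s /t dbl_inner !rr exprMn; congr (_ / _); congr (2 * _ ^+ 2 - _).
have S1 : \sum_i \sum_j `|x i * x j + y i * y j| <= \sum_i \sum_j
   (2/3 * (r i * r j) + 7/18 * (p i * p j + q i * q j) - 1/18 * (s i * s j + t i * t j)).
  by apply: ler_sum => i _; apply: ler_sum => j _; exact: hpt.
rewrite dsum_lin in S1.
have hr2 : \sum_i r i ^+ 2 = 2.
  by rewrite (eq_bigr (fun i => x i ^+ 2 + y i ^+ 2)) ?big_split /= ?hx ?hy // => i _; rewrite nrm_sq.
have hpq2 : \sum_i p i ^+ 2 + \sum_i q i ^+ 2 = 2.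
  by rewrite -big_split /= -hr2; apply: eq_bigr => i _; rewrite dbl_norm nrm_sq.
have hrp : \sum_i r i * p i = 0.
  rewrite (eq_bigr (fun i => x i ^+ 2 - y i ^+ 2)) ?sumrB ?hx ?hy ?subrr // => i _.
  exact: nrm_mul_dbl1.
have hrq : \sum_i r i * q i = 0.
  rewrite (eq_bigr (fun i => 2 * (x i * y i))) -?mulr_sumr ?hxy ?mulr0 // => i _.
  by rewrite nrm_mul_dbl2 mulrA.
pose S := \sum_i r i.
pose w i := 1 - S / 2 * r i.
have hw2 : \sum_i w i ^+ 2 = n%:R - S ^+ 2 / 2.
  have -> : \sum_i w i ^+ 2 = \sum_i (1 - S * r i + S ^+ 2 / 4 * r i ^+ 2).
    by apply: eq_bigr => i _; rewrite /w; field.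
  rewrite big_split sumrB /= -mulr_sumr -mulr_sumr hr2 sumr_const card_ord.
  by rewrite -/S; field.
have hwp : \sum_i w i * p i = \sum_i p i.
  have -> : \sum_i w i * p i = \sum_i (p i - S / 2 * (r i * p i)).
    by apply: eq_bigr => i _; rewrite /w; field.
  by rewrite sumrB -mulr_sumr hrp mulr0 subr0.
have hwq : \sum_i w i * q i = \sum_i q i.
  have -> : \sum_i w i * q i = \sum_i (q i - S / 2 * (r i * q i)).
    by apply: eq_bigr => i _; rewrite /w; field.
  by rewrite sumrB -mulr_sumr hrq mulr0 subr0.
have c1 := cauchy_schwarz w p.
have c2 := cauchy_schwarz w q.
rewrite hwp hw2 in c1; rewrite hwq hw2 in c2.
have st0 : 0 <= (\sum_i s i) ^+ 2 + (\sum_i t i) ^+ 2 by rewrite addr_ge0 ?sqr_ge0.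
have pq0 : 0 <= (\sum_i p i) ^+ 2 + (\sum_i q i) ^+ 2 by rewrite addr_ge0 ?sqr_ge0.
have hw0 : 0 <= n%:R - S ^+ 2 / 2 by rewrite -hw2 sumr_ge0 // => i _; exact: sqr_ge0.
have : (\sum_i p i) ^+ 2 + (\sum_i q i) ^+ 2 <= (n%:R - S ^+ 2 / 2) * 2.
  by apply: (le_trans (lerD c1 c2)); rewrite -mulrDr hpq2.
rewrite -/S in S1.
move=> H; apply: (le_trans S1); nra.
Qed.

End Core.

Lemma core_ineq (R : rcfType) (n : nat) (A : 'M[R]_n) (x y : 'I_n -> R) :
  (forall i j : 'I_n, i != j -> 0 <= A i j <= 1) ->
  (forall i : 'I_n, 0 <= A i i) ->
  \sum_i x i ^+ 2 = 1 -> \sum_i y i ^+ 2 = 1 -> \sum_i x i * y i = 0 ->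
  - (2 * n%:R) / 3 <= \sum_i \sum_j A i j * (x i * x j + y i * y j).
Proof.
move=> hA hAd hx hy hxy.
have low i j : (x i * x j + y i * y j - `|x i * x j + y i * y j|) / 2 <=
    A i j * (x i * x j + y i * y j).
  have [<-|ne] := eqVneq i j.
    have g0 : 0 <= x i * x i + y i * y i by rewrite -!expr2 addr_ge0 ?sqr_ge0.
    by rewrite ger0_norm // subrr mul0r mulr_ge0.
  have /andP [a0 a1] := hA i j ne.
  have [g0|g0] := lerP 0 (x i * x j + y i * y j).
    by rewrite ger0_norm // subrr mul0r mulr_ge0.
  rewrite ltr0_norm //; nra.
have S1 := abs_sum_bound hx hy hxy.
have S2 : \sum_i \sum_j (x i * x j + y i * y j - `|x i * x j + y i * y j|) / 2 <=
    \sum_i \sum_j A i j * (x i * x j + y i * y j).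
  by apply: ler_sum => i _; apply: ler_sum => j _; exact: low.
have E : \sum_i \sum_j (x i * x j + y i * y j - `|x i * x j + y i * y j|) / 2 =
   ((\sum_i x i) ^+ 2 + (\sum_i y i) ^+ 2 - \sum_i \sum_j `|x i * x j + y i * y j|) / 2.
  rewrite !dsum_sq -dsum_add -dsum_sub mulr_suml; apply: eq_bigr => i _.
  by rewrite mulr_suml.
rewrite E in S2.
have : 0 <= (\sum_i x i) ^+ 2 + (\sum_i y i) ^+ 2 by rewrite addr_ge0 ?sqr_ge0.
move=> h; apply: le_trans S2; lra.
Qed.
Section Restrict.
Variable R : realFieldType.

Lemma dot_self_eq0 k (x : 'rV[R]_k) : (x *m x^T) 0 0 = 0 -> x = 0.
Proof.
rewrite mxE => h; apply/rowP => j; rewrite mxE.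
have ge0 : forall i : 'I_k, predT i -> 0 <= x 0 i * x^T i 0.
  by move=> i _; rewrite mxE -expr2 sqr_ge0.
have := psumr_eq0P ge0 h (i := j) isT.
by rewrite mxE -expr2 => /eqP; rewrite sqrf_eq0 => /eqP ->.
Qed.

Lemma restrict m (A : 'M[R]_m.+1) (x : 'rV_m.+1) (l : R) :
  A^T = A -> x != 0 -> x *m A = l *: x ->
  exists (W : 'M[R]_(m, m.+1)) (C : 'M[R]_m),
   [/\ W *m x^T = 0, row_free W, W *m A = C *m W &
       char_poly A = ('X - l%:P) * char_poly C].
Proof.
move=> sA xn0 xA.
set K := kermx x^T.
have rK : \rank K = m.
  by rewrite /K mxrank_ker mxrank_tr rank_rV xn0 subn1.
suff main : forall k (W : 'M_(k, m.+1)), k = m -> (W :=: K)%MS -> row_free W ->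
  exists (W : 'M[R]_(m, m.+1)) (C : 'M[R]_m),
   [/\ W *m x^T = 0, row_free W, W *m A = C *m W &
       char_poly A = ('X - l%:P) * char_poly C].
  exact: (main _ (row_base K) rK (eq_row_base K) (row_base_free K)).
move=> k W km WK Wf; subst k.
have Wx : W *m x^T = 0 by apply/sub_kermxP; rewrite -/K WK.
have Ax : A *m x^T = l *: x^T.
  by rewrite -{1}sA -trmx_mul xA linearZ.
have : (W *m A <= W)%MS.
  rewrite WK /K; apply/sub_kermxP.
  by rewrite -mulmxA Ax -scalemxAr Wx scaler0.
case/submxP => C WA.
exists W, C; split => //.
pose P : 'M[R]_(1 + m, m.+1) := col_mx x W.
have Pf : row_free P.
  rewrite -kermx_eq0; apply/eqP/row_matrixP => i; rewrite row0.
  set u := row i (kermx P).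
  have uP : u *m P = 0 by rewrite /u -row_mul mulmx_ker row0.
  rewrite -[u]hsubmxK in uP *.
  move: uP; rewrite /P mul_row_col => uP.
  have h1 : lsubmx u *m (x *m x^T) = 0.
    have := congr1 (mulmx^~ x^T) uP.
    by rewrite mul0mx mulmxDl -!mulmxA Wx mulmx0 addr0.
  have xx : (x *m x^T) 0 0 != 0.
    by apply/eqP => /dot_self_eq0 h; move: xn0; rewrite h eqxx.
  have l0 : lsubmx u = 0.
    move: h1; rewrite [x *m x^T]mx11_scalar mul_mx_scalar => /eqP.
    by rewrite scalemx_eq0 (negPf xx) /= => /eqP.
  have r0 : rsubmx u = 0.
    by apply/eqP; rewrite -(mulmx_free_eq0 _ Wf); move: uP; rewrite l0 mul0mx add0r => ->.
  by rewrite l0 r0 row_mx0.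
pose M : 'M[R]_(1 + m) := block_mx (l%:M : 'M_1) 0 0 C.
have PA : P *m A = M *m P.
  by rewrite /P /M mul_col_mx mul_block_col xA -WA mul_scalar_mx !mul0mx addr0 add0r.
have Pu : P \in unitmx by rewrite -row_free_unit.
pose Pp := map_mx (@polyC R) P.
have E : Pp *m char_poly_mx A = char_poly_mx M *m Pp.
  by rewrite /char_poly_mx mulmxBr mulmxBl mul_mx_scalar mul_scalar_mx -!map_mxM PA.
have D := congr1 determinant E.
rewrite !det_mulmx in D.
have dP : \det Pp != 0.
  by rewrite det_map_mx polyC_eq0 -unitfE -unitmxE.
have -> : char_poly A = char_poly M.
  by apply: (mulfI dP); rewrite /char_poly D mulrC.
rewrite /char_poly /M char_block_diag_mx det_ublock det_mx11 !mxE eqxx /=.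
by rewrite mulr1n.
Qed.

End Restrict.

Section Eig.
Variable R : rcfType.

Lemma dot_sum k (v w : 'rV[R]_k) : (v *m w^T) 0 0 = \sum_i v 0 i * w 0 i.
Proof. by rewrite mxE; apply: eq_bigr => j _; rewrite mxE. Qed.

Lemma quad_eig k (A : 'M[R]_k) (v : 'rV_k) c :
  v *m A = c *: v -> (v *m v^T) 0 0 = 1 ->
  c = \sum_i \sum_j A i j * (v 0 i * v 0 j).
Proof.
move=> vA h.
have <- : (v *m A *m v^T) 0 0 = c by rewrite vA -scalemxAl mxE h mulr1.
rewrite mxE; under eq_bigr => j _ do rewrite !mxE mulr_suml.
rewrite exchange_big; apply: eq_bigr => i _; apply: eq_bigr => j _.
ring.
Qed.

Lemma normalize k (v : 'rV[R]_k) : v != 0 ->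
  exists s : R, ((s *: v) *m (s *: v)^T) 0 0 = 1.
Proof.
move=> vn0.
set d := (v *m v^T) 0 0.
have d0 : 0 <= d by rewrite /d dot_sum sumr_ge0 // => i _; rewrite -expr2 sqr_ge0.
have dn0 : d != 0 by apply/eqP => /dot_self_eq0 h; move: vn0; rewrite h eqxx.
exists (Num.sqrt d)^-1.
rewrite linearZ /= -scalemxAl -scalemxAr scalerA mxE -/d.
have sq : Num.sqrt d ^+ 2 = d by rewrite sqr_sqrtr.
have sn0 : Num.sqrt d != 0 by rewrite sqrtr_eq0 -ltNge lt0r dn0.
by rewrite -expr2 exprVn sq mulVf.
Qed.

End Eig.

Unset Implicit Arguments.
Unset Strict Implicit.

Theorem theorem1p2 (R : realType) (n : nat) (A : 'M[R]_n) (mu : seq R) :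
  (2 <= n)%N ->
  A^T = A ->
  (forall i j : 'I_n, i != j -> 0 <= A i j <= 1) ->
  (forall i : 'I_n, 0 <= A i i) ->
  eigenvalues_desc A mu ->
  mu`_(n - 2) + mu`_(n - 1) >= - (2 * n%:R) / 3 /\
  mu`_(n - 2) >= - n%:R / 3.
Proof.
move=> n2 sA hA hAd [smu srt cpA].
case: n n2 A sA hA hAd smu cpA => [|[|m]] // _ A sA hA hAd smu cpA.
case/lastP: mu smu srt cpA => [//|mu' a] smu srt cpA.
case/lastP: mu' smu srt cpA => [|mu'' b] smu srt cpA.
  by move: smu; rewrite size_rcons.
have sz : size mu'' = m by move: smu; rewrite !size_rcons => -[].
have -> : (m.+2 - 2)%N = m by rewrite subSS subSS subn0.
have -> : (m.+2 - 1)%N = m.+1 by rewrite subSS subn0.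
rewrite !nth_rcons !size_rcons sz ltnn eqxx ltnSn.
have ba : a <= b.
  have : sorted (fun x y => y <= x) [:: b; a].
    apply: (subseq_sorted _ _ srt).
      by move=> ? ? ? h1 h2; exact: le_trans h2 h1.
    by rewrite -cats1 -cats1 -catA /=; exact: suffix_subseq.
  by rewrite /= andbT.
have hsum : - (2 * (m.+2)%:R) / 3 <= b + a.
  have ra : root (char_poly A) a by rewrite cpA root_prod_XsubC mem_rcons mem_head.
  have /eigenvalueP [x xA xn0] : eigenvalue A a by rewrite eigenvalue_root_char.
  have [W [C [Wx Wf WA cpC]]] := restrict sA xn0 xA.
  have cpC' : char_poly C = \prod_(z <- rcons mu'' b) ('X - z%:P).
    apply: (@mulIf _ ('X - a%:P)); first by rewrite polyXsubC_eq0.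
    by move: cpA; rewrite big_rcons /= => <-; rewrite cpC mulrC.
  have rb : root (char_poly C) b by rewrite cpC' root_prod_XsubC mem_rcons mem_head.
  have /eigenvalueP [u uC un0] : eigenvalue C b by rewrite eigenvalue_root_char.
  set y := u *m W.
  have yA : y *m A = b *: y by rewrite /y -mulmxA WA mulmxA uC -scalemxAl.
  have yn0 : y != 0 by rewrite /y mulmx_free_eq0.
  have xy : x *m y^T = 0 by rewrite /y trmx_mul mulmxA -(trmxK x) -trmx_mul Wx trmx0 mul0mx.
  have [sx hx] := normalize xn0.
  have [sy hy] := normalize yn0.
  have x'A : (sx *: x) *m A = a *: (sx *: x) by rewrite -scalemxAl xA !scalerA mulrC.
  have y'A : (sy *: y) *m A = b *: (sy *: y) by rewrite -scalemxAl yA !scalerA mulrC.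
  have ea := quad_eig x'A hx.
  have eb := quad_eig y'A hy.
  have hxy : ((sx *: x) *m (sy *: y)^T) 0 0 = 0.
    by rewrite linearZ /= -scalemxAl -scalemxAr xy !scaler0 mxE.
  rewrite !dot_sum in hx hy hxy.
  have := core_ineq (x := fun i => (sx *: x) 0 i) (y := fun i => (sy *: y) 0 i) hA hAd.
  rewrite ea eb -dsum_add.
  have e2 : forall (F : 'I_m.+2 -> R), \sum_i F i * F i = \sum_i F i ^+ 2.
    by move=> F; apply: eq_bigr => i _; rewrite expr2.
  rewrite -!e2 => /(_ hx hy hxy) H; apply: (le_trans H); apply: ler_sum => i _.
  by apply: ler_sum => j _; rewrite mulrDr addrC.
rewrite ltnn eqxx; split; first exact: hsum.
move: hsum ba; set N := (m.+2)%:R => h1 h2; lra.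
Qed.
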